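(* Let $\mathbf{u}$ be quasi-definite with SMOP $(P_n)$, $c\in\mathbb{C}$ with $P_n(c)\ne0$ for all $n$, and $\widetilde{\mathbf{u}}=(x-c)\mathbf{u}$ with associated polynomials of the first kind $(\widetilde P^{(1)}_n)$. Let $\mathbf{u}^\alpha$ be a quasi-definite functional whose SMOP is $R_n(x)=\frac{\mathbf{u}_0}{\widetilde{\mathbf{u}}_0}\big[(x-c)P^{(1)}_n(x)-P_{n+1}(x)\big]$, $n\ge0$. Then $(\widetilde P^{(1)}_n)_{n\ge0}$ is the SMOP of $(x-c)\mathbf{u}^\alpha$; i.e., up to a nonzero constant factor, $\widetilde{\mathbf{u}}^{(1)}=(x-c)\mathbf{u}^\alpha$ is a canonical Christoffel transformation of $\mathbf{u}^\alpha$.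
   Context: Linear functionals on complex polynomials, moments $\mathbf{u}_n$, $\langle(x-c)\mathbf{u},p\rangle=\langle\mathbf{u},(x-c)p\rangle$. Quasi-definite: all leading principal Hankel minors nonzero; SMOP = sequence of monic orthogonal polynomials, satisfying $xP_n=P_{n+1}+b_nP_n+a_nP_{n-1}$, $P_{-1}=0$, $P_0=1$, $a_n\neq0$. Associated polynomials of the first kind: monic, $xP^{(1)}_n=P^{(1)}_{n+1}+b_{n+1}P^{(1)}_n+a_{n+1}P^{(1)}_{n-1}$, $P^{(1)}_{-1}=0,P^{(1)}_0=1$; $\widetilde{\mathbf{u}}^{(1)}$ is a functional with SMOP $(\widetilde P^{(1)}_n)$. (The polynomials $R_n$ are monic of degree $n$ and satisfy a three-term recurrence with nonzero coefficients, so such $\mathbf{u}^\alpha$ exists.) *)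

(* Defs.v *)
From HB Require Import structures.
From mathcomp Require Import all_boot all_order all_algebra.
From mathcomp Require Import reals.
From mathcomp.real_closed Require Import complex.
Set Implicit Arguments. Unset Strict Implicit. Unset Printing Implicit Defensive.
Import Order.TTheory GRing.Theory Num.Theory.
Local Open Scope ring_scope.

(* A linear functional u on C[x] is represented by its sequence of moments
   u_n = <u, x^n>; its action on a polynomial is obtained by linearity. *)
Definition functional (C : nzRingType) := nat -> C.

Definition act (C : nzRingType) (u : functional C) (p : {poly C}) : C :=
  \sum_(i < size p) p`_i * u i.

Definition mulXc (C : nzRingType) (c : C) (u : functional C) : functional C :=
  fun n => act u (('X - c%:P) * 'X^n).

Definition quasi_definite (C : comNzRingType) (u : functional C) : Prop :=
  forall n : nat, \det (\matrix_(i < n.+1, j < n.+1) u (i + j)%N) != 0.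

Definition is_SMOP (C : nzRingType) (u : functional C) (P : nat -> {poly C}) : Prop :=
  (forall n, P n \is monic) /\ (forall n, size (P n) = n.+1) /\
  (forall n m, n != m -> act u (P n * P m) = 0) /\
  (forall n, act u (P n * P n) != 0).

(* Monic polynomials generated by a three-term recurrence
   x Q_n = Q_{n+1} + b_n Q_n + a_n Q_{n-1}, Q_{-1} = 0, Q_0 = 1. *)
Fixpoint ttrr_aux (C : nzRingType) (a b : nat -> C) (n : nat)
  : {poly C} * {poly C} :=
  match n with
  | 0 => (1, 0)
  | k.+1 => let (q, qm) := ttrr_aux a b k in
            (('X - (b k)%:P) * q - a k *: qm, q)
  end.
Definition ttrr (C : nzRingType) (a b : nat -> C) (n : nat) : {poly C} :=
  (ttrr_aux a b n).1.

Definition satisfies_ttrr (C : nzRingType) (P : nat -> {poly C}) (a b : nat -> C) : Prop :=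
  P 0 = 1 /\
  (forall n, 'X * P n = P n.+1 + b n *: P n + (if n is k.+1 then a n *: P k else 0)) /\
  (forall n, (0 < n)%N -> a n != 0).

Definition assoc1 (C : nzRingType) (a b : nat -> C) : nat -> {poly C} :=
  ttrr (fun n => a n.+1) (fun n => b n.+1).

(* Main.v *)
Require Import Defs.
From HB Require Import structures.
From mathcomp Require Import all_boot all_order all_algebra.
From mathcomp Require Import reals.
From mathcomp.real_closed Require Import complex.
From mathcomp Require Import ring lra zify.
Import Order.TTheory GRing.Theory Num.Theory.
Local Open Scope ring_scope.

Section Gen.
Variable F : fieldType.
Implicit Types (u w : functional F) (p q : {poly F}).

Lemma actE u p N : (size p <= N)%N -> act u p = \sum_(i < N) p`_i * u i.
Proof.
move=> H; rewrite /act (big_ord_widen N (fun i => p`_i * u i) H) big_mkcond /=.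
apply: eq_bigr => i _; case: ifP => // /negbT; rewrite -leqNgt => Hi.
by rewrite nth_default // mul0r.
Qed.

Lemma act0 u : act u 0 = 0.
Proof. by rewrite /act size_poly0 big_ord0. Qed.

Lemma actD u p q : act u (p + q) = act u p + act u q.
Proof.
pose N := maxn (size p) (size q).
rewrite !(@actE u _ (N)) ?leq_maxl ?leq_maxr ?(leq_trans (size_polyD _ _)) //.
by rewrite -big_split; apply: eq_bigr => i _; rewrite coefD mulrDl.
Qed.

Lemma actZ u k p : act u (k *: p) = k * act u p.
Proof.
rewrite !(@actE u _ (size p)) ?size_scale_leq // mulr_sumr.
by apply: eq_bigr => i _; rewrite coefZ mulrA.
Qed.

Lemma actN u p : act u (- p) = - act u p.
Proof. by rewrite -scaleN1r actZ mulN1r. Qed.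

Lemma actB u p q : act u (p - q) = act u p - act u q.
Proof. by rewrite actD actN. Qed.

Lemma act_sum u n (G : 'I_n -> {poly F}) :
  act u (\sum_(i < n) G i) = \sum_(i < n) act u (G i).
Proof. by apply: (big_morph (act u) (actD u) (act0 u)). Qed.

Lemma act1 u : act u 1 = u 0%N.
Proof. by rewrite (@actE u _ (1)) ?size_poly1 // big_ord1 coef1 mul1r. Qed.

Lemma actC u k : act u k%:P = k * u 0%N.
Proof. by rewrite -[k%:P]mulr1 mul_polyC actZ act1. Qed.

Lemma actXn u n : act u 'X^n = u n.
Proof.
rewrite (@actE u _ (n.+1)) ?size_polyXn // big_ord_recr /= big1 ?add0r.
  by rewrite coefXn eqxx mul1r.
by move=> i _; rewrite coefXn ltn_eqF ?mul0r.

Qed.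

Lemma actX u : act u 'X = u 1%N.
Proof. by rewrite -actXn expr1. Qed.

Lemma polyE p : p = \sum_(i < size p) p`_i *: 'X^i.
Proof. by rewrite -{1}[p]coefK poly_def. Qed.

Lemma act_mulXc c u p : act (mulXc c u) p = act u (('X - c%:P) * p).
Proof.
have -> : ('X - c%:P) * p = \sum_(i < size p) p`_i *: (('X - c%:P) * 'X^i).
  rewrite {1}[p]polyE mulr_sumr; apply: eq_bigr => i _; by rewrite scalerAr.
rewrite act_sum /act; apply: eq_bigr => i _.
by rewrite -/(act u _) actZ.
Qed.


Lemma size_le_sub p q m : (size p <= m.+1)%N -> (size q <= m.+1)%N ->
  p`_m = q`_m -> (size (p - q)%R <= m)%N.
Proof.
move=> Hp Hq E; apply/leq_sizeP => j; rewrite leq_eqVlt => /orP [/eqP <-|Hj].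
  by rewrite coefB E subrr.
by rewrite coefB !nth_default ?subrr // (leq_trans _ Hj).
Qed.

Lemma monic_coef p m : p \is monic -> size p = m.+1 -> p`_m = 1.
Proof. by move=> /monicP; rewrite /lead_coef => + E; rewrite E. Qed.

Lemma orth_low v Y : is_SMOP v Y -> forall n q, (size q <= n)%N ->
  act v (Y n * q) = 0.
Proof.
move=> [mon [sz [orth _]]] n.
suff H: forall m q, (m <= n)%N -> (size q <= m)%N -> act v (Y n * q) = 0.
  by move=> q; apply: H.
elim=> [|m IH] q Hm Hq.
  by move: Hq; rewrite leqn0 size_poly_eq0 => /eqP->; rewrite mulr0 act0.
have Hs: (size (q - q`_m *: Y m)%R <= m)%N.
  apply: size_le_sub => //; first by rewrite (leq_trans (size_scale_leq _ _)) // sz.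
  by rewrite coefZ (@monic_coef _ _ (mon m) (sz m)) mulr1.
have -> : q = (q - q`_m *: Y m) + q`_m *: Y m by rewrite subrK.
rewrite mulrDr actD IH ?(ltnW Hm) // -scalerAr actZ orth ?mulr0 ?addr0 //.
by rewrite neq_ltn Hm orbT.
Qed.

Lemma SMOP_uniq v Y : is_SMOP v Y -> forall n p, (size p <= n)%N ->
  (forall j, (j < n)%N -> act v (p * Y j) = 0) -> p = 0.
Proof.
move=> [mon [sz [orth norm]]].
elim=> [|n IH] p Hp Ho.
  by apply/eqP; rewrite -size_poly_eq0 -leqn0.
set l := p`_n.
have Hs: (size (p - l *: Y n)%R <= n)%N.
  apply: size_le_sub => //; first by rewrite (leq_trans (size_scale_leq _ _)) // sz.
  by rewrite coefZ (@monic_coef _ _ (mon n) (sz n)) mulr1.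
have H0 : p - l *: Y n = 0.
  apply: IH => // j Hj; rewrite mulrBl actB -scalerAl actZ Ho ?(ltn_trans Hj (ltnSn n)) //.
  by rewrite orth ?mulr0 ?subr0 // neq_ltn Hj orbT.
have Ep : p = l *: Y n by apply/eqP; rewrite -subr_eq0 H0.
have := Ho n (ltnSn n); rewrite Ep -scalerAl actZ => /eqP.
rewrite mulf_eq0 (negbTE (norm n)) orbF => /eqP l0.
by rewrite l0 scale0r.
Qed.

Lemma ttrr_auxS (a b : nat -> F) k : ttrr_aux a b k.+1 =
  (('X - (b k)%:P) * (ttrr_aux a b k).1 - a k *: (ttrr_aux a b k).2, (ttrr_aux a b k).1).
Proof. by rewrite /=; case: (ttrr_aux a b k). Qed.

Lemma ttrrS (a b : nat -> F) n : ttrr a b n.+1 =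
  ('X - (b n)%:P) * ttrr a b n - a n *: (if n is k.+1 then ttrr a b k else 0).
Proof.
rewrite /ttrr ttrr_auxS /=; case: n => [|n] //.
by rewrite ttrr_auxS.
Qed.

Lemma ttrr0 (a b : nat -> F) : ttrr a b 0 = 1.
Proof. by []. Qed.

Lemma ttrr1 (a b : nat -> F) : ttrr a b 1 = 'X - (b 0%N)%:P.
Proof. by rewrite ttrrS scaler0 subr0 mulr1. Qed.

Lemma ttrr2 (a b : nat -> F) n : ttrr a b n.+2 =
  ('X - (b n.+1)%:P) * ttrr a b n.+1 - a n.+1 *: ttrr a b n.
Proof. by rewrite ttrrS. Qed.

Lemma ttrr_ms (a b : nat -> F) n : ttrr a b n \is monic /\ size (ttrr a b n) = n.+1.
Proof.
suff H : forall n, (ttrr a b n \is monic /\ size (ttrr a b n) = n.+1) /\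
  (ttrr a b n.+1 \is monic /\ size (ttrr a b n.+1) = n.+2) by case: (H n).
elim=> [|k [[m0 s0] [m1 s1]]].
  by rewrite ttrr1 ttrr0 monic1 size_poly1 monicXsubC size_XsubC.
split=> //; rewrite ttrr2.
have Hs : size (('X - (b k.+1)%:P) * ttrr a b k.+1) = k.+3.
  by rewrite size_mul ?size_XsubC ?s1 // -?size_poly_eq0 ?size_XsubC ?s1.
have Hl : (size (- (a k.+1 *: ttrr a b k))%R < size (('X - (b k.+1)%:P) * ttrr a b k.+1)%R)%N.
  by rewrite size_polyN Hs (leq_ltn_trans (size_scale_leq _ _)) // s0.
split; last by rewrite size_polyDl.
by apply/monicP; rewrite lead_coefDl // lead_coefM (monicP (monicXsubC _)) (monicP m1) mulr1.
Qed.


Lemma favard w (al be : nat -> F) :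
  (forall n, al n.+1 != 0) -> (forall n, act w (ttrr al be n.+1) = 0) ->
  act w 1 != 0 -> is_SMOP w (ttrr al be).
Proof.
move=> Ha H0 H1; set Q := ttrr al be.
have XQ : forall n, 'X * Q n.+1 = Q n.+2 + be n.+1 *: Q n.+1 + al n.+1 *: Q n.
  by move=> n; rewrite /Q ttrr2 -!mul_polyC; ring.
have C1 : forall j n, (j < n)%N -> act w ('X^j * Q n) = 0.
  elim=> [|j IH] n Hjn.
    by case: n Hjn => [|n] // _; rewrite expr0 mul1r H0.
  case: n Hjn => [|m] // Hjm.
  case: m Hjm => [|m] // Hjm.
  rewrite exprSr -mulrA XQ !mulrDr !actD -!scalerAr !actZ !IH ?mulr0 ?addr0 //; lia.
have C2 : forall n, act w ('X^n * Q n) != 0.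
  elim=> [|n IH]; first by rewrite expr0 mul1r /Q ttrr0.
  rewrite exprSr -mulrA XQ !mulrDr !actD -!scalerAr !actZ (C1 n n.+2) // (C1 n n.+1) // mulr0 !add0r.
  by rewrite mulf_neq0.
have C3 : forall n q, (size q <= n)%N -> act w (Q n * q) = 0.
  move=> n q Hq; rewrite [q]polyE mulr_sumr act_sum big1 // => i _.
  by rewrite -scalerAr actZ [Q n * _]mulrC C1 ?mulr0 // (leq_trans (ltn_ord i) Hq).
have ms := ttrr_ms al be.
split; [|split; [|split]].
- by move=> n; case: (ms n).
- by move=> n; case: (ms n).
- move=> n m; rewrite neq_ltn => /orP [H|H].
    by rewrite mulrC C3 // (ms n).2.
  by rewrite C3 // (ms m).2.
- move=> n.
  have -> : Q n * Q n = Q n * (Q n - 'X^n) + 'X^n * Q n by ring.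
  rewrite actD C3 ?add0r ?C2 //.
  apply: size_le_sub; rewrite ?(ms n).2 ?size_polyXn //.
  by rewrite (@monic_coef _ _ (ms n).1 (ms n).2) coefXn eqxx.
Qed.

Lemma christoffel_rec (c b1 b2 a1 a2 d0 d1 d2 : F) (y0 y1 y2 y3 : {poly F}) :
  y2 = ('X - b1%:P) * y1 - a1 *: y0 ->
  y3 = ('X - b2%:P) * y2 - a2 *: y1 ->
  d1 * d0 = (c - b1) * d0 - a1 ->
  d2 * d1 = (c - b2) * d1 - a2 ->
  d0 != 0 ->
  y3 - d2 *: y2 = ('X - (b2 + d2 - d1)%:P) * (y2 - d1 *: y1)
                  - (a1 * d1 / d0) *: (y1 - d0 *: y0).
Proof.
move=> E2 E3 R1 R2 nz.
have A1 : a1 = (c - b1 - d1) * d0 by rewrite mulrBl R1; ring.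
have A2 : a2 = (c - b2 - d2) * d1 by rewrite mulrBl R2; ring.
have A3 : a1 * d1 / d0 = (c - b1 - d1) * d1 by rewrite A1; field.
rewrite A3 E3 E2 A1 A2 -!mul_polyC; ring.
Qed.

Lemma coef_elim p q x y m : p`_m = 1 -> (size q <= m)%N -> q != 0 ->
  x *: p + y *: q = 0 -> x = 0 /\ y = 0.
Proof.
move=> Hp Hq nz E.
have hx : x = 0.
  have := congr1 (fun r : {poly F} => r`_m) E.
  by rewrite coefD !coefZ Hp (nth_default _ Hq) mulr0 addr0 mulr1 coef0.
split=> //; move: E; rewrite hx scale0r add0r => /eqP.
by rewrite scaler_eq0 (negbTE nz) orbF => /eqP.
Qed.


Lemma sat_ttrr Y (al be : nat -> F) : satisfies_ttrr Y al be ->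
  forall n, Y n = ttrr al be n.
Proof.
move=> [Y0 [YX _]].
suff H : forall n, Y n = ttrr al be n /\ Y n.+1 = ttrr al be n.+1 by move=> n; case: (H n).
elim=> [|n [IH1 IH2]].
  split=> //; have E := YX 0%N; rewrite /= addr0 Y0 in E.
  by rewrite ttrr1 -[Y 1%N](addrK (be 0%N *: 1)) -E -mul_polyC !mulr1.
split=> //; have E := YX n.+1; rewrite /= in E.
have -> : Y n.+2 = 'X * Y n.+1 - be n.+1 *: Y n.+1 - al n.+1 *: Y n.
  by rewrite E -!mul_polyC; ring.
by rewrite ttrr2 -IH1 -IH2 -!mul_polyC; ring.
Qed.

End Gen.

Section Main.
Variable F : fieldType.

Lemma main_gen (u : functional F) (P : nat -> {poly F}) (a b : nat -> F) (c : F)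
  (Pt : nat -> {poly F}) (ta tb : nat -> F) (ua : functional F) :
  is_SMOP u P -> satisfies_ttrr P a b ->
  (forall n, (P n).[c] != 0) ->
  is_SMOP (mulXc c u) Pt -> satisfies_ttrr Pt ta tb ->
  is_SMOP ua (fun n => (u 0%N / mulXc c u 0%N) *:
                        (('X - c%:P) * assoc1 a b n - P n.+1)) ->
  is_SMOP (mulXc c ua) (assoc1 ta tb).
Proof.
move=> HP HPs Pc HPt HPts HR.
have EP := @sat_ttrr F _ _ _ HPs; have EPt := @sat_ttrr F _ _ _ HPts.
have [Pmon [Psz [Porth Pnorm]]] := HP.
have [Ptmon [Ptsz [Ptorth Ptnorm]]] := HPt.
have [_ [_ Pta]] := HPts.
set k := u 0%N / mulXc c u 0%N.
set R := fun n => k *: (('X - c%:P) * assoc1 a b n - P n.+1).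
pose d n := (P n.+1).[c] / (P n).[c].
have P0 : P 0%N = 1 by rewrite EP.
have u0 : u 0%N != 0 by have := Pnorm 0%N; rewrite P0 mulr1 act1.
have ub : u 1%N = b 0%N * u 0%N.
  have := Porth 1%N 0%N isT; rewrite P0 mulr1 EP ttrr1 actB actX actC => /eqP.
  by rewrite subr_eq0 => /eqP.
have ut0 : mulXc c u 0%N = (b 0%N - c) * u 0%N.
  by rewrite /mulXc expr0 mulr1 actB actX actC ub mulrBl.
have hd0 : d 0%N = c - b 0%N.
  by rewrite /d P0 hornerC divr1 EP ttrr1 !hornerE.
have dnz : forall n, d n != 0 by move=> n; rewrite /d mulf_neq0 ?invr_neq0.
have hk : k * (b 0%N - c) = 1.
  have : b 0%N - c != 0 by rewrite -oppr_eq0 opprB -hd0 dnz.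
  by move=> H; rewrite /k ut0; field; rewrite H u0.
have drel : forall j, d j.+1 * d j = (c - b j.+1) * d j - a j.+1.
  move=> j.
  have Hc : (P j.+2).[c] = (c - b j.+1) * (P j.+1).[c] - a j.+1 * (P j).[c].
    by rewrite !EP ttrr2 !hornerE.
  have h1 := Pc j; have h2 := Pc j.+1.
  rewrite /d Hc; field; by rewrite h1 h2.
have R0 : R 0%N = 1.
  rewrite /R /assoc1 ttrr0 mulr1 EP ttrr1.
  have -> : 'X - c%:P - ('X - (b 0%N)%:P) = (b 0%N - c)%:P by rewrite polyCB; ring.
  by rewrite -mul_polyC -polyCM hk.
have hd1 : d 1%N = c - b 1%N + k * a 1%N.
  have := drel 0%N; rewrite hd0 => H.
  have hnz : c - b 0%N != 0 by rewrite -hd0 dnz.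
  have hk' : k = - (c - b 0%N)^-1.
    apply: (mulIf hnz); rewrite mulNr mulVf // -hk; ring.
  rewrite hk'; apply: (mulIf hnz); rewrite H; field; by rewrite hnz.
have R1 : R 1%N = 'X - c%:P + (d 1%N)%:P.
  rewrite /R /assoc1 ttrr1 EP ttrr2 ttrr1 ttrr0 /=.
  have -> : ('X - c%:P) * ('X - (b 1%N)%:P) -
      (('X - (b 1%N)%:P) * ('X - (b 0%N)%:P) - a 1%N *: 1) =
      ('X - (b 1%N)%:P) * (b 0%N - c)%:P + (a 1%N)%:P.
    by rewrite -mul_polyC polyCB; ring.
  rewrite hd1 -mul_polyC mulrDr mulrA [k%:P * _]mulrC -mulrA -polyCM hk mulr1 -polyCM !polyCD ?polyCB ?polyCN; ring.
have Rrec : forall m, R m.+2 = ('X - (b m.+2)%:P) * R m.+1 - a m.+2 *: R m.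
  move=> m; rewrite /R /assoc1 ttrr2 !EP (ttrr2 _ a b m.+1) /= -!mul_polyC; ring.
have HR2 : is_SMOP ua R by exact: HR.
have [_ [_ [Rorth Rnorm]]] := HR2.
have RA : forall m, act ua (R m.+1) = 0.
  by move=> m; have := Rorth m.+1 0%N isT; rewrite R0 mulr1.
have RA0 : act ua 1 != 0 by have := Rnorm 0%N; rewrite R0 mulr1.
have S3 : forall n, ('X - c%:P) * Pt n = P n.+1 - d n *: P n.
  move=> n.
  set W := P n.+1 - d n *: P n.
  have rW : root W c.
    rewrite /root /W !hornerE /d; apply/eqP; field; exact: Pc.
  have [K EK] := factor_theorem W c rW.
  have Hl : (size (- (d n *: P n)) < size (P n.+1))%N.
    by rewrite size_polyN Psz (leq_ltn_trans (size_scale_leq _ _)) // Psz.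
  have sW : size W = n.+2 by rewrite /W size_polyDl // Psz.
  have lW : lead_coef W = 1 by rewrite /W lead_coefDl //; apply/monicP.
  have Knz : K != 0 by apply/eqP => K0; move: sW; rewrite EK K0 mul0r size_poly0.
  have sK : size K = n.+1.
    by move: sW; rewrite EK size_Mmonic ?monicXsubC // size_XsubC addn2 /= => [[]].
  have lK : K`_n = 1.
    by move: lW; rewrite EK lead_coef_Mmonic ?monicXsubC // /lead_coef sK.
  suff -> : Pt n = K by rewrite mulrC -EK.
  apply/eqP; rewrite -subr_eq0; apply/eqP.
  apply: (@SMOP_uniq F _ _ HPt n).
    by apply: size_le_sub; rewrite ?Ptsz ?sK // lK (@monic_coef _ _ _ (Ptmon n) (Ptsz n)).
  move=> j Hj; rewrite mulrBl actB Ptorth ?neq_ltn ?Hj ?orbT // sub0r act_mulXc.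
  rewrite mulrA [_ * K]mulrC -EK /W mulrBl actB -scalerAl actZ.
  rewrite !(@orth_low F _ _ HP) ?Ptsz ?subrr ?mulr0 ?oppr0 //. all: try lia. by rewrite addr0 oppr0.
have Wm : forall j, ('X - c%:P) * Pt j \is monic /\ size (('X - c%:P) * Pt j) = j.+2.
  move=> j; split; first by rewrite monicMl ?monicXsubC.
  by rewrite size_Mmonic ?Ptmon ?size_XsubC ?Ptsz // -size_poly_eq0 size_XsubC.
have S4 : forall m, tb m.+1 = b m.+2 + d m.+2 - d m.+1 /\
                    ta m.+1 = a m.+1 * d m.+1 / d m.
  move=> m.
  have H1 := @christoffel_rec F c (b m.+1) (b m.+2) (a m.+1) (a m.+2) (d m) (d m.+1)
    (d m.+2) (P m) (P m.+1) (P m.+2) (P m.+3) (ltac:(by rewrite !EP ttrr2))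
    (ltac:(by rewrite !EP ttrr2)) (drel m) (drel m.+1) (dnz m).
  rewrite -!S3 in H1.
  have H2 : ('X - c%:P) * Pt m.+2 = ('X - (tb m.+1)%:P) * (('X - c%:P) * Pt m.+1)
      - ta m.+1 *: (('X - c%:P) * Pt m).
    by rewrite !EPt ttrr2 -!mul_polyC; ring.
  have := subrr (('X - c%:P) * Pt m.+2); rewrite {1}H1 H2 => E0.
  have E : (tb m.+1 - (b m.+2 + d m.+2 - d m.+1)) *: (('X - c%:P) * Pt m.+1) +
     (ta m.+1 - a m.+1 * d m.+1 / d m) *: (('X - c%:P) * Pt m) = 0.
    by rewrite -E0 -!mul_polyC; ring.
  have Wnz : ('X - c%:P) * Pt m != 0 by rewrite -size_poly_eq0 (Wm m).2.
  have [hx hy] := @coef_elim F _ _ _ _ _ (@monic_coef _ _ _ (Wm m.+1).1 (Wm m.+1).2)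
    (eq_leq (Wm m).2) Wnz E.
  by move/eqP: hx; move/eqP: hy; rewrite !subr_eq0 => /eqP -> /eqP ->.
set Q := assoc1 ta tb.
have Q2 : forall n, Q n.+2 = ('X - (tb n.+2)%:P) * Q n.+1 - ta n.+2 *: Q n.
  by move=> n; rewrite /Q /assoc1 ttrr2.
have S5 : forall n, ('X - c%:P) * Q n = R n.+1 - d n.+1 *: R n.
  suff H : forall n, ('X - c%:P) * Q n = R n.+1 - d n.+1 *: R n /\
                     ('X - c%:P) * Q n.+1 = R n.+2 - d n.+2 *: R n.+1.
    by move=> n; case: (H n).
  elim=> [|n [IH1 IH2]].
    split.
      by rewrite /Q /assoc1 ttrr0 R1 R0 -mul_polyC; ring.
    have A2 : a 2%N = (c - b 2%N - d 2%N) * d 1%N by rewrite mulrBl drel; ring.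
    rewrite /Q /assoc1 ttrr1 /= (Rrec 0%N) R1 R0 (S4 0%N).1 A2 -!mul_polyC; ring.
  split=> //.
  have -> : ('X - c%:P) * Q n.+2 = ('X - (tb n.+2)%:P) * (('X - c%:P) * Q n.+1)
      - ta n.+2 *: (('X - c%:P) * Q n) by rewrite Q2 -!mul_polyC; ring.
  rewrite IH1 IH2 (S4 n.+1).1 (S4 n.+1).2; symmetry.
  exact: (@christoffel_rec F c (b n.+2) (b n.+3) (a n.+2) (a n.+3) (d n.+1) (d n.+2)
    (d n.+3) (R n) (R n.+1) (R n.+2) (R n.+3) (Rrec n) (Rrec n.+1) (drel n.+1)
    (drel n.+2) (dnz n.+1)).
rewrite /assoc1; apply: favard.
- by move=> n; apply: Pta.
- by move=> n; rewrite act_mulXc -[ttrr _ _ _]/(Q n.+1) S5 actB RA actZ RA mulr0 subr0.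
- rewrite act_mulXc.
  have -> : ('X - c%:P) * 1 = ('X - c%:P) * Q 0%N by rewrite /Q /assoc1 ttrr0.
  rewrite S5 actB RA sub0r actZ oppr_eq0.
  by rewrite mulf_neq0 // R0.
Qed.

End Main.

Local Open Scope complex_scope.

Theorem mainTheorem11 (R : realType)
  (u : functional R[i]) (P : nat -> {poly R[i]}) (a b : nat -> R[i]) (c : R[i])
  (Pt : nat -> {poly R[i]}) (ta tb : nat -> R[i])
  (ua : functional R[i]) :
  quasi_definite u -> is_SMOP u P -> satisfies_ttrr P a b ->
  (forall n, (P n).[c] != 0) ->
  is_SMOP (mulXc c u) Pt -> satisfies_ttrr Pt ta tb ->
  quasi_definite ua ->
  is_SMOP ua (fun n => (u 0%N / mulXc c u 0%N) *:
                        (('X - c%:P) * assoc1 a b n - P n.+1)) ->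
  is_SMOP (mulXc c ua) (assoc1 ta tb).
Proof.
move=> _ HP HPs Pc HPt HPts _ HR.
exact: (@main_gen _ u P a b c Pt ta tb ua HP HPs Pc HPt HPts HR).
Qed.
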